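(* For generic $a$ ($a\neq1$) and $k$, each of the following three pairs is a WP-Bailey pair relative to $a$ with parameter $k$ (all formulas valid for $n\ge0$): (i) $\boldsymbol{\alpha}_n=\dfrac{(-1)^nq^{n(n-1)/2}(1-aq^{2n})(a;q)_n}{(1-a)(q;q)_n}$, $\boldsymbol{\beta}_n=\dfrac{(-1)^nk^nq^{n(n-1)/2}(k;q)_n}{a^n(q;q)_n}$; (ii) $\boldsymbol{\alpha}_n=\dfrac{(-1)^na^{-n}(1-aq^{2n})(a^2;q^2)_n}{(1-a)(q^2;q^2)_n}$, $\boldsymbol{\beta}_n=\dfrac{(-1)^na^{-n}(k^2;q^2)_n}{(q^2;q^2)_n}$; (iii) $\boldsymbol{\alpha}_n=\dfrac{q^{-n/2}(1-aq^{2n})(a,\sqrt{q};q)_n}{(1-a)(q,a\sqrt{q};q)_n}$, $\boldsymbol{\beta}_n=\dfrac{(k,k\sqrt{q}/a;q)_n}{(q,a\sqrt{q};q)_n}q^{-n/2}$.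
   Context: Notation: $(x;q)_n=\prod_{i=0}^{n-1}(1-xq^i)$, $(x_1,\dots,x_j;q)_n=(x_1;q)_n\cdots(x_j;q)_n$. A pair of sequences $(\boldsymbol{\alpha}_n(a,k,q),\boldsymbol{\beta}_n(a,k,q))_{n\ge0}$ is a WP-Bailey pair (relative to $a$, with parameter $k$) if $\boldsymbol{\alpha}_0=1$ and for all $n\ge0$ \[\boldsymbol{\beta}_n=\sum_{j=0}^n\frac{(k/a;q)_{n-j}(k;q)_{n+j}}{(q;q)_{n-j}(aq;q)_{n+j}}\boldsymbol{\alpha}_j.\] *)

(* Defs.v *)
From HB Require Import structures.
From mathcomp Require Import all_boot all_order all_algebra.
Set Implicit Arguments. Unset Strict Implicit. Unset Printing Implicit Defensive.
Import Order.TTheory GRing.Theory Num.Theory.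
Local Open Scope ring_scope.

Definition qpoch (F : fieldType) (x q : F) (n : nat) : F :=
  \prod_(i < n) (1 - x * q ^+ i).

Definition WP_Bailey_pair (F : fieldType) (a k q : F) (alpha beta : nat -> F) : Prop :=
  alpha 0%N = 1 /\
  forall n : nat,
    beta n = \sum_(j < n.+1)
      (qpoch (k / a) q (n - j) * qpoch k q (n + j)
        / (qpoch q q (n - j) * qpoch (a * q) q (n + j))) * alpha j.

(* Main.v *)
Require Import Defs.
From HB Require Import structures.
From mathcomp Require Import all_boot all_order all_algebra.
From mathcomp Require Import ring zify.
Import GRing.Theory.
Local Open Scope ring_scope.
Set Implicit Arguments. Unset Strict Implicit.

Lemma qpochS (F : fieldType) (x q : F) n : qpoch x q n.+1 = qpoch x q n * (1 - x * q ^+ n).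
Proof. by rewrite /qpoch big_ord_recr. Qed.
Lemma qpoch0 (F : fieldType) (x q : F) : qpoch x q 0 = 1.
Proof. by rewrite /qpoch big_ord0. Qed.
Lemma qpoch_neq0 (F : fieldType) (x q : F) n : (forall i, (i < n)%N -> 1 - x * q ^+ i != 0) -> qpoch x q n != 0.
Proof.
elim: n => [|n IH] H; first by rewrite qpoch0 oner_neq0.
rewrite qpochS mulf_neq0 //; last exact: H.
by apply: IH => i hi; apply: H; exact: ltnW.
Qed.

Lemma tele (F : fieldType) (F1 F0 G : nat -> F) c n :
  (forall j, (j <= n)%N -> F1 j - c * F0 j = G j.+1 - G j) -> G 0%N = 0 ->
  G n.+1 = - F1 n.+1 ->
  \sum_(j < n.+2) F1 j = c * \sum_(j < n.+1) F0 j.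
Proof.
move=> H G0 Gn.
have E : forall p, (p <= n.+1)%N -> \sum_(j < p) (F1 j - c * F0 j) = G p.
  elim=> [|p IH] hp; first by rewrite big_ord0 G0.
  by rewrite big_ord_recr /= IH ?(ltnW hp) // H // addrC subrK.
move: (E _ (leqnn _)); rewrite sumrB -mulr_sumr => E2.
apply/eqP; rewrite -subr_eq0; apply/eqP.
by rewrite big_ord_recr /= addrAC E2 Gn addNr.
Qed.

Definition Kf (F : fieldType) (a k q : F) n j := qpoch (k / a) q (n - j) * qpoch k q (n + j)
  / (qpoch q q (n - j) * qpoch (a * q) q (n + j)).

Lemma wp_of_rec (F : fieldType) (a k q : F) (alpha beta c : nat -> F) (G : nat -> nat -> F) :
  alpha 0%N = 1 -> beta 0%N = 1 -> (forall n, beta n.+1 = c n * beta n) ->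
  (forall n j, (j <= n)%N -> Kf a k q n.+1 j * alpha j - c n * (Kf a k q n j * alpha j)
      = G n j.+1 - G n j) ->
  (forall n, G n 0%N = 0) -> (forall n, G n n.+1 = - (Kf a k q n.+1 n.+1 * alpha n.+1)) ->
  WP_Bailey_pair a k q alpha beta.
Proof.
move=> a0 b0 bS HJ G0 Gn; split => // n.
have -> : forall m, \sum_(j < m.+1) (qpoch (k / a) q (m - j) * qpoch k q (m + j)
      / (qpoch q q (m - j) * qpoch (a * q) q (m + j))) * alpha j
     = \sum_(j < m.+1) Kf a k q m j * alpha j by [].
elim: n => [|n IH].
  by rewrite big_ord_recr big_ord0 /= /Kf !qpoch0 a0 b0 add0r !mulr1 invr1 mulr1.
rewrite bS IH; symmetry; apply: (@tele F (fun j => Kf a k q n.+1 j * alpha j) (fun j => Kf a k q n j * alpha j) (G n) (c n) n) => //.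
by move=> j hj; rewrite HJ.
Qed.

Lemma half_step j : ((j.+1 * (j.+1 - 1))./2 = (j * (j - 1))./2 + j)%N.
Proof.
rewrite !subn1 -!bin2 /=.
by rewrite binS bin1.
Qed.

Lemma expr2n (F : fieldType) (x : F) j : x ^+ (2 * j) = x ^+ j * x ^+ j.
Proof. by rewrite -exprD; congr (_ ^+ _); lia. Qed.

Lemma nzq (F : fieldType) (q : F) (hq : forall n : nat, q ^+ n.+1 != 1) n : 1 - q ^+ n.+1 != 0.
Proof. by rewrite subr_eq0 eq_sym hq. Qed.
Lemma nzaq (F : fieldType) (a q : F) (haq : forall n : nat, a * q ^+ n.+1 != 1) n : 1 - a * q ^+ n.+1 != 0.
Proof. by rewrite subr_eq0 eq_sym haq. Qed.
Lemma nzQ (F : fieldType) (q : F) (hq : forall n : nat, q ^+ n.+1 != 1) n : qpoch q q n != 0.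
Proof. by apply: qpoch_neq0 => i _; rewrite -exprS nzq. Qed.
Lemma nzAQ (F : fieldType) (a q : F) (haq : forall n : nat, a * q ^+ n.+1 != 1) n : qpoch (a * q) q n != 0.
Proof. by apply: qpoch_neq0 => i _; rewrite -mulrA -exprS nzaq. Qed.
Lemma nz1a (F : fieldType) (a : F) (ha1 : a != 1) : 1 - a != 0.
Proof. by rewrite subr_eq0 eq_sym. Qed.

Lemma part1_step (F : fieldType) (a k q : F) (ha0 : a != 0) (ha1 : a != 1)
  (hq : forall n : nat, q ^+ n.+1 != 1)
  (haq : forall n : nat, a * q ^+ n.+1 != 1) n j : (j <= n)%N ->
  let al := (fun n => (-1) ^+ n * q ^+ ((n * (n - 1))./2) * (1 - a * q ^+ (2 * n)) * qpoch a q n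
              / ((1 - a) * qpoch q q n)) in
  let g := (fun j => (-1) ^+ j * q ^+ ((j * (j - 1))./2) * qpoch a q j * (1 - q ^+ j)
              / ((1 - a) * qpoch q q j)) in
  let L := (fun n => - (1 - k * q ^+ (n + n).+1) / (1 - q ^+ n.+1)) in
  let c := (fun n => - (k * q ^+ n * (1 - k * q ^+ n)) / (a * (1 - q ^+ n.+1))) in
  let G := (fun n j => L n * (qpoch (k / a) q (n.+1 - j) * qpoch k q (n + j)
             / (qpoch q q (n.+1 - j) * qpoch (a * q) q (n + j))) * g j) in
  Kf a k q n.+1 j * al j - c n * (Kf a k q n j * al j) = G n j.+1 - G n j.
Proof.
move=> hjn al g L c G.
have [m ->] : exists m, n = (m + j)%N by exists (n - j)%N; rewrite subnK.
rewrite /G /L /c /al /g /Kf.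
have e1 : ((m + j).+1 - j = m.+1)%N by lia.
have e2 : ((m + j) - j = m)%N by lia.
have e3 : ((m + j).+1 - j.+1 = m)%N by lia.
have e4 : ((m + j).+1 + j = (m + j + j).+1)%N by lia.
have e5 : ((m + j) + j.+1 = (m + j + j).+1)%N by lia.
rewrite e1 e2 e3 e4 e5 half_step !qpochS.
rewrite !expr2n !exprS !exprD.
field.
rewrite -?exprD -?mulrA -?exprS.
by rewrite !(nzq hq, nzaq haq, nzQ hq, nzAQ haq, nz1a ha1, ha0).
Qed.

Lemma part1 (F : fieldType) (a k q : F) (ha0 : a != 0) (ha1 : a != 1)
  (hq : forall n : nat, q ^+ n.+1 != 1)
  (haq : forall n : nat, a * q ^+ n.+1 != 1) :
  WP_Bailey_pair a k q
    (fun n => (-1) ^+ n * q ^+ ((n * (n - 1))./2) * (1 - a * q ^+ (2 * n)) * qpoch a q n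
              / ((1 - a) * qpoch q q n))
    (fun n => (-1) ^+ n * k ^+ n * q ^+ ((n * (n - 1))./2) * qpoch k q n
              / (a ^+ n * qpoch q q n)).
Proof.
apply: (wp_of_rec (c := fun n => - (k * q ^+ n * (1 - k * q ^+ n)) / (a * (1 - q ^+ n.+1)))
  (G := fun n j => (- (1 - k * q ^+ (n + n).+1) / (1 - q ^+ n.+1)) *
      (qpoch (k / a) q (n.+1 - j) * qpoch k q (n + j)
             / (qpoch q q (n.+1 - j) * qpoch (a * q) q (n + j))) *
      ((-1) ^+ j * q ^+ ((j * (j - 1))./2) * qpoch a q j * (1 - q ^+ j)
              / ((1 - a) * qpoch q q j)))).
- rewrite !qpoch0 ?muln0 ?mul0n /= !expr0; field; by rewrite nz1a.
- rewrite !qpoch0 ?muln0 ?mul0n /= !expr0; field; try exact: oner_neq0.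
- move=> n /=.
  rewrite half_step !qpochS !exprS !exprD.
  field.
  rewrite -?exprD -?mulrA -?exprS.
  by rewrite !(nzq hq, nzaq haq, nzQ hq, nzAQ haq, nz1a ha1, ha0, expf_neq0 _ ha0).
- by move=> n j hj; apply: part1_step.
- by move=> n /=; rewrite !expr0 subrr !(mulr0, mul0r).
- move=> n /=.
  rewrite subnn /Kf subnn.
  have -> : (n + n.+1 = (n + n).+1)%N by lia.
  have -> : (n.+1 + n.+1 = (n + n).+2)%N by lia.
  rewrite half_step !qpoch0 !qpochS !expr2n !exprS !exprD.
  field.
  rewrite -?exprD -?mulrA -?exprS.
  by rewrite !(nzq hq, nzaq haq, nzQ hq, nzAQ haq, nz1a ha1, ha0, expf_neq0 _ ha0).
Qed.

Lemma sq_pow (F : fieldType) (x : F) n : (x ^+ 2) ^+ n = x ^+ n * x ^+ n.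
Proof. by rewrite -exprM expr2n. Qed.

Lemma nzqE (F : fieldType) (q : F) (hq : forall n : nat, q ^+ n.+1 != 1) e : (0 < e)%N -> 1 - q ^+ e != 0.
Proof. by case: e => // e _; rewrite nzq. Qed.
Lemma nzaqE (F : fieldType) (a q : F) (haq : forall n : nat, a * q ^+ n.+1 != 1) e : (0 < e)%N -> 1 - a * q ^+ e != 0.
Proof. by case: e => // e _; rewrite nzaq. Qed.
Lemma nzQ2 (F : fieldType) (q : F) (hq : forall n : nat, q ^+ n.+1 != 1) n : qpoch (q ^+ 2) (q ^+ 2) n != 0.
Proof. by apply: qpoch_neq0 => i _; rewrite -exprM -exprD nzqE. Qed.

Ltac nzside hq haq ha0 ha1 :=
  repeat (apply/andP; split);
  rewrite -?mulrA; repeat (rewrite -?exprD -?exprS -?expr2);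
  first [ exact: (nzQ hq) | exact: (nzAQ haq) | exact: (nzQ2 hq) | exact: (nz1a ha1) | exact: ha0 | exact: oner_neq0
        | exact: (expf_neq0 _ ha0) | (apply: (nzqE hq); lia) | (apply: (nzaqE haq); lia) ].

Lemma part2_step (F : fieldType) (a k q : F) (ha0 : a != 0) (ha1 : a != 1)
  (hq : forall n : nat, q ^+ n.+1 != 1)
  (haq : forall n : nat, a * q ^+ n.+1 != 1) n j : (j <= n)%N ->
  let al := (fun n => (-1) ^+ n * a ^- n * (1 - a * q ^+ (2 * n)) * qpoch (a ^+ 2) (q ^+ 2) n
              / ((1 - a) * qpoch (q ^+ 2) (q ^+ 2) n)) in
  let g := (fun j => (-1) ^+ j * a ^- j * qpoch (a ^+ 2) (q ^+ 2) j * (1 - (q ^+ 2) ^+ j)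
              / ((1 - a) * qpoch (q ^+ 2) (q ^+ 2) j)) in
  let L := (fun n => - (1 - k * q ^+ (n + n).+1) / (1 - (q ^+ 2) ^+ n.+1)) in
  let c := (fun n => - (1 - k ^+ 2 * (q ^+ 2) ^+ n) / (a * (1 - (q ^+ 2) ^+ n.+1))) in
  let G := (fun n j => L n * (qpoch (k / a) q (n.+1 - j) * qpoch k q (n + j)
             / (qpoch q q (n.+1 - j) * qpoch (a * q) q (n + j))) * g j) in
  Kf a k q n.+1 j * al j - c n * (Kf a k q n j * al j) = G n j.+1 - G n j.
Proof.
move=> hjn al g L c G.
have [m ->] : exists m, n = (m + j)%N by exists (n - j)%N; rewrite subnK.
rewrite /G /L /c /al /g /Kf.
have e1 : ((m + j).+1 - j = m.+1)%N by lia.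
have e2 : ((m + j) - j = m)%N by lia.
have e3 : ((m + j).+1 - j.+1 = m)%N by lia.
have e4 : ((m + j).+1 + j = (m + j + j).+1)%N by lia.
have e5 : ((m + j) + j.+1 = (m + j + j).+1)%N by lia.
rewrite e1 e2 e3 e4 e5 !qpochS !sq_pow !expr2n !expr2 !exprS !exprD.
field.
nzside hq haq ha0 ha1.
Qed.

Lemma part2 (F : fieldType) (a k q : F) (ha0 : a != 0) (ha1 : a != 1)
  (hq : forall n : nat, q ^+ n.+1 != 1)
  (haq : forall n : nat, a * q ^+ n.+1 != 1) :
  WP_Bailey_pair a k q
    (fun n => (-1) ^+ n * a ^- n * (1 - a * q ^+ (2 * n)) * qpoch (a ^+ 2) (q ^+ 2) n
              / ((1 - a) * qpoch (q ^+ 2) (q ^+ 2) n))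
    (fun n => (-1) ^+ n * a ^- n * qpoch (k ^+ 2) (q ^+ 2) n / qpoch (q ^+ 2) (q ^+ 2) n).
Proof.
apply: (wp_of_rec (c := fun n => - (1 - k ^+ 2 * (q ^+ 2) ^+ n) / (a * (1 - (q ^+ 2) ^+ n.+1)))
  (G := fun n j => (- (1 - k * q ^+ (n + n).+1) / (1 - (q ^+ 2) ^+ n.+1)) *
      (qpoch (k / a) q (n.+1 - j) * qpoch k q (n + j)
             / (qpoch q q (n.+1 - j) * qpoch (a * q) q (n + j))) *
      ((-1) ^+ j * a ^- j * qpoch (a ^+ 2) (q ^+ 2) j * (1 - (q ^+ 2) ^+ j)
              / ((1 - a) * qpoch (q ^+ 2) (q ^+ 2) j)))).
- rewrite !qpoch0 ?muln0 ?mul0n /= !expr0; field; try nzside hq haq ha0 ha1.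
- rewrite !qpoch0 !expr0; field; try exact: oner_neq0.
- move=> n /=.
  rewrite !qpochS ?sq_pow ?expr2 ?exprS ?exprD.
  field.
  nzside hq haq ha0 ha1.
- by move=> n j hj; apply: part2_step.
- by move=> n /=; rewrite !expr0 subrr !(mulr0, mul0r).
- move=> n /=.
  rewrite subnn /Kf subnn.
  have -> : (n + n.+1 = (n + n).+1)%N by lia.
  have -> : (n.+1 + n.+1 = (n + n).+2)%N by lia.
  rewrite !qpoch0 !qpochS !sq_pow !expr2n !expr2 !exprS !exprD.
  field.
  nzside hq haq ha0 ha1.
Qed.

Lemma nzas (F : fieldType) (a q s : F) (has : forall n : nat, a * s * q ^+ n != 1) n : 1 - a * (s * q ^+ n) != 0.
Proof. by rewrite subr_eq0 eq_sym mulrA has. Qed.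
Lemma nzAS (F : fieldType) (a q s : F) (has : forall n : nat, a * s * q ^+ n != 1) n : qpoch (a * s) q n != 0.
Proof. by apply: qpoch_neq0 => i _; rewrite -mulrA nzas. Qed.

Ltac nzside3 hq haq ha0 ha1 has hs0 :=
  repeat (apply/andP; split);
  rewrite -?mulrA; repeat (rewrite -?exprD -?exprS -?expr2);
  first [ exact: (nzQ hq) | exact: (nzAQ haq) | exact: (nzQ2 hq) | exact: (nz1a ha1) | exact: ha0
        | exact: oner_neq0 | exact: hs0 | exact: (expf_neq0 _ hs0) | exact: (nzAS has) | exact: (nzas has)
        | exact: (expf_neq0 _ ha0) | (apply: (nzqE hq); lia) | (apply: (nzaqE haq); lia) ].

Lemma part3_step (F : fieldType) (a k q s : F) (ha0 : a != 0) (ha1 : a != 1)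
  (hq : forall n : nat, q ^+ n.+1 != 1)
  (haq : forall n : nat, a * q ^+ n.+1 != 1)
  (hs2 : s ^+ 2 = q) (hs0 : s != 0)
  (has : forall n : nat, a * s * q ^+ n != 1) n j : (j <= n)%N ->
  let al := (fun n => s ^- n * (1 - a * q ^+ (2 * n)) * (qpoch a q n * qpoch s q n)
              / ((1 - a) * (qpoch q q n * qpoch (a * s) q n))) in
  let g := (fun j => s ^- j * (qpoch a q j * qpoch s q j) * (1 - q ^+ j) * (1 - a * q ^+ j / s)
              / ((1 - a) * (qpoch q q j * qpoch (a * s) q j))) in
  let L := (fun n => - (1 - k * q ^+ (n + n).+1) / ((1 - q ^+ n.+1) * (1 - a * s * q ^+ n))) in
  let c := (fun n => (1 - k * q ^+ n) * (1 - k * s / a * q ^+ n)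
              / ((1 - q ^+ n.+1) * (1 - a * s * q ^+ n)) / s) in
  let G := (fun n j => L n * (qpoch (k / a) q (n.+1 - j) * qpoch k q (n + j)
             / (qpoch q q (n.+1 - j) * qpoch (a * q) q (n + j))) * g j) in
  Kf a k q n.+1 j * al j - c n * (Kf a k q n j * al j) = G n j.+1 - G n j.
Proof.
move=> hjn al g L c G.
have [m ->] : exists m, n = (m + j)%N by exists (n - j)%N; rewrite subnK.
rewrite /G /L /c /al /g /Kf.
have e1 : ((m + j).+1 - j = m.+1)%N by lia.
have e2 : ((m + j) - j = m)%N by lia.
have e3 : ((m + j).+1 - j.+1 = m)%N by lia.
have e4 : ((m + j).+1 + j = (m + j + j).+1)%N by lia.
have e5 : ((m + j) + j.+1 = (m + j + j).+1)%N by lia.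
rewrite e1 e2 e3 e4 e5 !qpochS ?expr2n ?exprS ?exprD.
set x := q ^+ j; set y := q ^+ m.
set P1 := qpoch _ _ m; set P2 := qpoch k _ _; set P3 := qpoch q q m; set P4 := qpoch (a * q) _ _.
set P5 := qpoch a _ _; set P6 := qpoch s _ _; set P7 := qpoch q q j; set P8 := qpoch (a * s) _ _.
rewrite -hs2.
field.
subst x y P1 P2 P3 P4 P5 P6 P7 P8; rewrite hs2.
nzside3 hq haq ha0 ha1 has hs0.
Qed.

Ltac hide_q q :=
  repeat match goal with |- context [qpoch ?x ?y ?z] => let P := fresh "P" in set P := qpoch x y z end;
  repeat match goal with |- context [q ^+ ?e] => let P := fresh "X" in set P := q ^+ e end.
Ltac unhide := repeat match goal with P := _ |- _ => subst P end.

Lemma part3 (F : fieldType) (a k q s : F) (ha0 : a != 0) (ha1 : a != 1)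
  (hq : forall n : nat, q ^+ n.+1 != 1)
  (haq : forall n : nat, a * q ^+ n.+1 != 1)
  (hs2 : s ^+ 2 = q) (hs0 : s != 0)
  (has : forall n : nat, a * s * q ^+ n != 1) :
  WP_Bailey_pair a k q
    (fun n => s ^- n * (1 - a * q ^+ (2 * n)) * (qpoch a q n * qpoch s q n)
              / ((1 - a) * (qpoch q q n * qpoch (a * s) q n)))
    (fun n => (qpoch k q n * qpoch (k * s / a) q n) / (qpoch q q n * qpoch (a * s) q n)
              * s ^- n).
Proof.
apply: (wp_of_rec (c := fun n => (1 - k * q ^+ n) * (1 - k * s / a * q ^+ n)
              / ((1 - q ^+ n.+1) * (1 - a * s * q ^+ n)) / s)
  (G := fun n j => (- (1 - k * q ^+ (n + n).+1) / ((1 - q ^+ n.+1) * (1 - a * s * q ^+ n))) *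
      (qpoch (k / a) q (n.+1 - j) * qpoch k q (n + j)
             / (qpoch q q (n.+1 - j) * qpoch (a * q) q (n + j))) *
      (s ^- j * (qpoch a q j * qpoch s q j) * (1 - q ^+ j) * (1 - a * q ^+ j / s)
              / ((1 - a) * (qpoch q q j * qpoch (a * s) q j))))).
- rewrite !qpoch0 ?muln0 ?mul0n /= !expr0; field; try nzside3 hq haq ha0 ha1 has hs0.
- rewrite !qpoch0 !expr0; field; try exact: oner_neq0.
- move=> n /=.
  rewrite !qpochS ?exprS ?exprD.
  field.
  nzside3 hq haq ha0 ha1 has hs0.
- by move=> n j hj; apply: part3_step.
- by move=> n /=; rewrite !expr0 subrr !(mulr0, mul0r).
- move=> n /=.
  rewrite subnn /Kf subnn.
  have -> : (n + n.+1 = (n + n).+1)%N by lia.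
  have -> : (n.+1 + n.+1 = (n + n).+2)%N by lia.
  rewrite !qpoch0 !qpochS ?expr2n ?exprS ?exprD.
  hide_q q.
  rewrite -hs2.
  field.
  unhide; rewrite hs2.
  nzside3 hq haq ha0 ha1 has hs0.
Qed.

Unset Implicit Arguments. Set Strict Implicit.

Theorem mainTheorem15 (F : fieldType) (a k q s : F)
  (ha0 : a != 0) (ha1 : a != 1)
  (hq : forall n : nat, q ^+ n.+1 != 1)
  (haq : forall n : nat, a * q ^+ n.+1 != 1)
  (hs2 : s ^+ 2 = q) (hs0 : s != 0)
  (has : forall n : nat, a * s * q ^+ n != 1) :
  WP_Bailey_pair a k q
    (fun n => (-1) ^+ n * q ^+ ((n * (n - 1))./2) * (1 - a * q ^+ (2 * n)) * qpoch a q n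
              / ((1 - a) * qpoch q q n))
    (fun n => (-1) ^+ n * k ^+ n * q ^+ ((n * (n - 1))./2) * qpoch k q n
              / (a ^+ n * qpoch q q n))
  /\
  WP_Bailey_pair a k q
    (fun n => (-1) ^+ n * a ^- n * (1 - a * q ^+ (2 * n)) * qpoch (a ^+ 2) (q ^+ 2) n
              / ((1 - a) * qpoch (q ^+ 2) (q ^+ 2) n))
    (fun n => (-1) ^+ n * a ^- n * qpoch (k ^+ 2) (q ^+ 2) n / qpoch (q ^+ 2) (q ^+ 2) n)
  /\
  WP_Bailey_pair a k q
    (fun n => s ^- n * (1 - a * q ^+ (2 * n)) * (qpoch a q n * qpoch s q n)
              / ((1 - a) * (qpoch q q n * qpoch (a * s) q n)))
    (fun n => (qpoch k q n * qpoch (k * s / a) q n) / (qpoch q q n * qpoch (a * s) q n)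
              * s ^- n).
Proof.
split; first exact: part1.
split; first exact: part2.
exact: part3.
Qed.
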